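(* Let $P$ be a finite poset and $R$ a consistent restriction function on $P$. Then the poset $\Gamma(P,R)$ is isomorphic to the dual of the poset of meet-irreducible elements of the lattice $\mathrm{Inc}^R(P)$ (with the order induced from $\mathrm{Inc}^R(P)$). Consequently, the order ideals of $\Gamma(P,R)$ are in bijection with $\mathrm{Inc}^R(P)$.
   Context: A restriction function on a finite poset $P$ assigns to each $p\in P$ a nonempty finite set $R(p)\subseteq\mathbb{Z}$. $\mathrm{Inc}^R(P)$ is the set of increasing labelings: functions $f:P\to\mathbb{Z}$ with $f(p)\in R(p)$ for all $p$ and $p_1<p_2\Rightarrow f(p_1)<f(p_2)$. It is partially ordered by $f\le g$ iff $f(p)\le g(p)$ for all $p$; this is a finite distributive lattice (meet and join are pointwise min and max). An element $x$ of a lattice is meet-irreducible if it is not the top element and $x=y\wedge z$ implies $x=y$ or $x=z$. $R$ is consistent if for every cover relation $x\lessdot y$ in $P$, $\min R(x)<\min R(y)$ and $\max R(x)<\max R(y)$. Write $R(p)^*=R(p)\setminus\{\max R(p)\}$, $R(p)_{>k}$ for the smallest element of $R(p)$ greater than $k$, and $R(p)_{<k}$ for the largest element of $R(p)$ less than $k$. $\Gamma(P,R)$ is the poset on the set $\{(p,k): p\in P,\ k\in R(p)^*\}$ whose order is the reflexive–transitive closure of the relation $(p_1,k_1)\lessdot(p_2,k_2)$ (the covering relations of $\Gamma(P,R)$), which holds iff either (1) $p_1=p_2$ and $R(p_1)_{>k_2}=k_1$; or (2) $p_1\lessdot p_2$ in $P$, $k_1=R(p_1)_{<k_2}$ (and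 $k_1\ne\max R(p_1)$), and there is no $k\in R(p_2)$ with $k>k_2$ and $R(p_1)_{<k}=k_1$. An order ideal of a poset is a downward-closed subset. *)

(* Defs.v *)
From HB Require Import structures.
From mathcomp Require Import all_boot all_order all_algebra.
From Stdlib Require Import Relation_Operators.
Set Implicit Arguments. Unset Strict Implicit. Unset Printing Implicit Defensive.
Import Order.TTheory GRing.Theory Num.Theory.

Section IncLabelings.
Local Open Scope ring_scope.

(* A finite set of integers is represented by a (nonempty) sequence. *)
Definition minS (s : seq int) : int := \big[Num.min/head 0 s]_(k <- s) k.
Definition maxS (s : seq int) : int := \big[Num.max/head 0 s]_(k <- s) k.

Context {d : Order.disp_t} {P : finPOrderType d}.
Variable R : P -> seq int.

Definition pcover (x y : P) : bool :=
  (x < y)%O && [forall z : P, ~~ ((x < z)%O && (z < y)%O)].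

Definition restriction_fun : Prop := forall p, R p != [::].

Definition consistent : Prop :=
  forall x y : P, pcover x y ->
    minS (R x) < minS (R y) /\ maxS (R x) < maxS (R y).

Definition is_succ (S : seq int) (k k1 : int) : Prop :=
  [/\ k1 \in S, k < k1 & forall k', k' \in S -> k < k' -> k1 <= k'].
Definition is_pred (S : seq int) (k k1 : int) : Prop :=
  [/\ k1 \in S, k1 < k & forall k', k' \in S -> k' < k -> k' <= k1].

Definition gvert (x : P * int) : Prop :=
  x.2 \in R x.1 /\ x.2 <> maxS (R x.1).

Definition gcov_raw (x y : P * int) : Prop :=
  let: (p1, k1) := x in let: (p2, k2) := y in
  (p1 = p2 /\ is_succ (R p1) k2 k1) \/
  [/\ pcover p1 p2, is_pred (R p1) k2 k1, k1 <> maxS (R p1) &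
      ~ (exists k, [/\ k \in R p2, k2 < k & is_pred (R p1) k k1])].

Definition gcov (x y : P * int) : Prop := [/\ gvert x, gvert y & gcov_raw x y].

Definition gle (x y : P * int) : Prop := clos_refl_trans (P * int) gcov x y.

Definition Gamma := {x : P * int | gvert x}.

Definition inc (f : {ffun P -> int}) : Prop :=
  (forall p, f p \in R p) /\ (forall p1 p2 : P, (p1 < p2)%O -> f p1 < f p2).

Definition fle (f g : {ffun P -> int}) : Prop := forall p, f p <= g p.

Definition fmeet (f g : {ffun P -> int}) : {ffun P -> int} :=
  [ffun p => Num.min (f p) (g p)].

Definition is_top (f : {ffun P -> int}) : Prop :=
  inc f /\ forall g, inc g -> fle g f.

Definition meet_irreducible (f : {ffun P -> int}) : Prop :=
  [/\ inc f, ~ is_top f &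
      forall g h, inc g -> inc h -> f = fmeet g h -> f = g \/ f = h].

Definition IncT := {f : {ffun P -> int} | inc f}.
Definition MeetIrr := {f : {ffun P -> int} | meet_irreducible f}.

Definition order_ideal (I : Gamma -> Prop) : Prop :=
  forall u v : Gamma, gle (sval u) (sval v) -> I v -> I u.
Definition Ideal := {I : Gamma -> Prop | order_ideal I}.

End IncLabelings.

(* Main.v *)
Require Import Defs.
From HB Require Import structures.
From mathcomp Require Import all_boot all_order all_algebra.
From Stdlib Require Import Relation_Operators.
From mathcomp Require Import zify.
From Stdlib Require Import Classical ClassicalEpsilon ProofIrrelevance FunctionalExtensionality PropExtensionality.
Import Order.TTheory GRing.Theory Num.Theory.
Local Open Scope ring_scope.
Set Implicit Arguments. Unset Strict Implicit. Unset Printing Implicit Defensive.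

Definition pb (A : Prop) : bool := if excluded_middle_informative A then true else false.
Lemma pbP A : reflect A (pb A).
Proof. rewrite /pb; case: excluded_middle_informative => h; constructor => //. Qed.

Definition mnl (x0 : int) (s : seq int) := foldr Num.min x0 s.
Definition mxl (x0 : int) (s : seq int) := foldr Num.max x0 s.

Lemma mnl_in x0 s : mnl x0 s \in x0 :: s.
Proof.
elim: s => [|a s IH] /=; first by rewrite inE.
rewrite /Num.min; case: leP => _; rewrite !inE ?eqxx ?orbT //.
move: IH; rewrite /mnl !inE => /orP[->|->]; by rewrite ?orbT.
Qed.
Lemma mnl_le0 x0 s : mnl x0 s <= x0.
Proof. by elim: s => [|a s IH] //=; rewrite ge_min IH orbT. Qed.
Lemma mnl_le x0 s x : x \in s -> mnl x0 s <= x.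
Proof.
elim: s => [|a s IH] //=; rewrite inE => /orP[/eqP->|h]; rewrite ge_min ?lexx //.
by rewrite IH ?orbT.
Qed.
Lemma mxl_in x0 s : mxl x0 s \in x0 :: s.
Proof.
elim: s => [|a s IH] /=; first by rewrite inE.
rewrite /Num.max; case: leP => _; rewrite !inE ?eqxx ?orbT //.
move: IH; rewrite /mxl !inE => /orP[->|->]; by rewrite ?orbT.
Qed.
Lemma mxl_ge x0 s x : x \in s -> x <= mxl x0 s.
Proof.
elim: s => [|a s IH] //=; rewrite inE => /orP[/eqP->|h]; rewrite le_max ?lexx //.
by rewrite IH ?orbT.
Qed.

Lemma big_mxl x0 (s : seq int) : \big[Num.max/x0]_(k <- s) k = mxl x0 s.
Proof. by elim: s => [|a s IH]; rewrite ?big_nil ?big_cons ?IH. Qed.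
Lemma big_mnl x0 (s : seq int) : \big[Num.min/x0]_(k <- s) k = mnl x0 s.
Proof. by elim: s => [|a s IH]; rewrite ?big_nil ?big_cons ?IH. Qed.

Lemma maxS_in s : s != [::] -> maxS s \in s.
Proof.
rewrite /maxS big_mxl; case: s => // a s _.
have := mxl_in a (a :: s); rewrite inE => /orP[/eqP->|//]; by rewrite inE eqxx.
Qed.
Lemma maxS_ge s k : k \in s -> k <= maxS s.
Proof. rewrite /maxS big_mxl; exact: mxl_ge. Qed.
Lemma minS_in s : s != [::] -> minS s \in s.
Proof.
rewrite /minS big_mnl; case: s => // a s _.
have := mnl_in a (a :: s); rewrite inE => /orP[/eqP->|//]; by rewrite inE eqxx.
Qed.
Lemma minS_le s k : k \in s -> minS s <= k.
Proof. rewrite /minS big_mnl; exact: mnl_le. Qed.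

Lemma sig_eq (A : Type) (Pr : A -> Prop) (a b : {x | Pr x}) : sval a = sval b -> a = b.
Proof. case: a b => [a pa] [b pb'] /= e; subst b; f_equal; apply: proof_irrelevance. Qed.

Lemma maximal_elem (T : eqType) (r : T -> T -> Prop) (Q : T -> Prop) (s : seq T) :
  (forall x y z, r x y -> r y z -> r x z) ->
  (exists x, x \in s /\ Q x) ->
  exists x, x \in s /\ (Q x /\ forall y, y \in s -> Q y -> r x y -> r y x).
Proof.
move=> tr; elim: s => [|a s IH] [x0 [xs Qx0]]; first by rewrite in_nil in xs.
case: (classic (exists x, x \in s /\ Q x)) => [ex | nex].
- have [x [xs' [Qx xm]]] := IH ex.
  case: (classic (Q a /\ r x a /\ ~ r a x)) => [[Qa [rxa nrax]] | h].
  + exists a; split; first by rewrite inE eqxx.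
    split => // y; rewrite inE => /orP[/eqP-> //| ys] Qy ray.
    exact: tr (xm y ys Qy (tr _ _ _ rxa ray)) rxa.
  + exists x; split; first by rewrite inE xs' orbT.
    split => // y; rewrite inE => /orP[/eqP-> | ys] Qy; last exact: xm.
    move=> rxa; apply: NNPP => nr; apply: h; tauto.
- exists a.
  have ea : x0 = a.
    move: xs; rewrite inE => /orP[/eqP //| h]; exfalso; apply: nex; by exists x0.
  subst x0; split; first by rewrite inE eqxx.
  split => // y; rewrite inE => /orP[/eqP-> //| ys] Qy; exfalso; apply: nex; by exists y.
Qed.

Section Main.
Context {d : Order.disp_t} {P : finPOrderType d} (R : P -> seq int).
Hypothesis hR : restriction_fun R.
Hypothesis hC : consistent R.

Local Notation M p := (maxS (R p)).

Lemma maxR_in p : M p \in R p.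
Proof. exact: maxS_in (hR p). Qed.
Lemma le_maxR p k : k \in R p -> k <= M p.
Proof. exact: maxS_ge. Qed.
Lemma minR_in p : minS (R p) \in R p.
Proof. exact: minS_in (hR p). Qed.
Lemma ge_minR p k : k \in R p -> minS (R p) <= k.
Proof. exact: minS_le. Qed.

Lemma gle_inv x y : gle R x y -> (x.1 < y.1)%O \/ (x.1 = y.1 /\ y.2 <= x.2).
Proof.
rewrite /gle; elim => {x y}.
- move=> [p1 k1] [p2 k2] [_ _ /= [[-> [_ lt _]] | [cov _ _ _]]].
  + by right; split => //; exact: ltW.
  + by left; case/andP: cov.
- by move=> x; right; split.
- move=> x y z _ h1 _ h2.
  case: h1 => [lt1|[e1 l1]]; case: h2 => [lt2|[e2 l2]].
  + left; exact: lt_trans lt1 lt2.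
  + by left; rewrite -e2.
  + by left; rewrite e1.
  + by right; split; [rewrite e1 | exact: le_trans l2 l1].
Qed.

Lemma gle_antisym x y : gle R x y -> gle R y x -> x = y.
Proof.
case: x y => [p1 k1] [p2 k2] /gle_inv /= h1 /gle_inv /= h2.
case: h1 => [l1|[e1 l1]]; case: h2 => [l2|[e2 l2]].
- by have := lt_trans l1 l2; rewrite ltxx.
- by move: l1; rewrite e2 ltxx.
- by move: l2; rewrite e1 ltxx.
- by subst; congr pair; apply: le_anti; rewrite l1 l2.
Qed.

Lemma gle_lab (f : {ffun P -> int}) x y : inc R f -> gle R x y -> f y.1 <= y.2 -> f x.1 <= x.2.
Proof.
move=> [fR finc]; rewrite /gle; elim => {x y}.
- move=> [p1 k1] [p2 k2] [_ _ /= [[e [_ lt _]] | [cov [_ _ hp] _ _]]] h /=.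
  + subst p2; exact: le_trans h (ltW lt).
  + apply: hp; first exact: fR.
    case/andP: cov => lt12 _; exact: lt_le_trans (finc _ _ lt12) h.
- done.
- move=> x y z _ h1 _ h2 h; exact: h1 (h2 h).
Qed.

Lemma gle_same p : forall n a b, (absz (a - b) < n)%N -> gvert R (p,a) -> gvert R (p,b) ->
  b <= a -> gle R (p,a) (p,b).
Proof.
elim=> [//|n IH] a b hn va vb ba.
case: (eqVneq a b) => [->|nab]; first exact: rt_refl.
have lt : b < a by rewrite lt_neqAle eq_sym nab ba.
set s := [seq k <- R p | b < k].
have as_ : a \in s by rewrite mem_filter lt va.1.
set b' := mnl a s.
have hb' : b' \in s.
  have := mnl_in a s; rewrite inE => /orP[/eqP e|//]; by rewrite /b' e.
move: hb'; rewrite mem_filter => /andP[bb' b'R].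
have b'a : b' <= a := mnl_le0 a s.
have vb' : gvert R (p,b').
  split => //= e; apply: va.2 => /=; apply: le_anti.
  by rewrite (le_maxR va.1) /= -e b'a.
apply: (rt_trans _ _ _ (p,b')).
- apply: IH => //.
  have := le_maxR b'R; lia.
- apply: rt_step; split => //; left; split => //; split => // k' hk' lt'.
  by apply: mnl_le; rewrite mem_filter lt' hk'.
Qed.

Lemma gle_cov_pred p1 p2 k1 : pcover p1 p2 -> gvert R (p1,k1) ->
  forall n k2, (absz (M p2 - k2) < n)%N -> gvert R (p2,k2) -> is_pred (R p1) k2 k1 ->
  gle R (p1,k1) (p2,k2).
Proof.
move=> cov v1; elim=> [//|n IH] k2 hn v2 hp.
case: (classic (exists k, [/\ k \in R p2, k2 < k & is_pred (R p1) k k1]))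
  => [[k [kR lt hpk]] | nex]; last first.
  by apply: rt_step; split => //; right; split => //; exact: v1.2.
set s := [seq k' <- R p2 | k2 < k'].
set k2' := mnl k s.
have [k2'R lt2'] : k2' \in R p2 /\ k2 < k2'.
  have := mnl_in k s; rewrite -/k2' inE => /orP[/eqP->|]; first by [].
  by rewrite mem_filter => /andP[-> ->].
have k2'le : k2' <= k := mnl_le0 k s.
have hp' : is_pred (R p1) k2' k1.
  case: hp => k1R lt1 h1; split => //; first exact: lt_trans lt1 lt2'.
  move=> k' k'R lt'; case: hpk => _ _ h; apply: h => //; exact: lt_le_trans lt' k2'le.
have v2' : gvert R (p2,k2').
  split => //= e.
  have ek : k = M p2 by apply: le_anti; rewrite le_maxR //= -e k2'le.
  apply: v1.2 => /=; apply: le_anti; rewrite le_maxR ?v1.1 //=.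
  case: hpk => _ _ h; apply: h; first exact: maxR_in.
  by rewrite ek; exact: (hC cov).2.
apply: (rt_trans _ _ _ (p2,k2')).
- apply: IH => //; have := le_maxR k2'R; lia.
- apply: rt_step; split => //; left; split => //; split => // k' hk' lt'.
  by apply: mnl_le; rewrite mem_filter lt' hk'.
Qed.

Definition inI (I : Gamma R -> Prop) (x : P * int) : Prop :=
  exists h : gvert R x, I (exist _ x h).
Definition FI (I : Gamma R -> Prop) : {ffun P -> int} :=
  [ffun p => mnl (M p) [seq k <- R p | pb (inI I (p,k))]].
Definition GI (f : {ffun P -> int}) : Gamma R -> Prop :=
  fun u => f (sval u).1 <= (sval u).2.
Definition down (v : Gamma R) : Gamma R -> Prop := fun u => gle R (sval u) (sval v).

Lemma FI_in I p : FI I p \in R p.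
Proof.
rewrite ffunE; have := mnl_in (M p) [seq k <- R p | pb (inI I (p,k))].
rewrite inE => /orP[/eqP->|]; first exact: maxR_in.
by rewrite mem_filter => /andP[_ ->].
Qed.
Lemma FI_le_max I p : FI I p <= M p.
Proof. rewrite ffunE; exact: mnl_le0. Qed.
Lemma FI_le I p k : k \in R p -> inI I (p,k) -> FI I p <= k.
Proof.
move=> kR h; rewrite ffunE; apply: mnl_le; rewrite mem_filter kR andbT; exact/pbP.
Qed.
Lemma FI_cases I p : FI I p = M p \/ inI I (p, FI I p).
Proof.
have := mnl_in (M p) [seq k <- R p | pb (inI I (p,k))].
have -> : mnl (M p) [seq k <- R p | pb (inI I (p,k))] = FI I p by rewrite ffunE.
rewrite inE => /orP[/eqP->|]; first by left.
rewrite mem_filter => /andP[/pbP h _]; by right.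
Qed.

Lemma GFI I : order_ideal I -> forall u, GI (FI I) u <-> I u.
Proof.
move=> hI [[p k] hv]; rewrite /GI /=; split.
- move=> h; case: (FI_cases I p) => [e|[h' Ih']].
  + exfalso; apply: hv.2 => /=; apply: le_anti; rewrite le_maxR ?hv.1 //= -e h //.
  + apply: (hI _ (exist _ (p, FI I p) h')) Ih' => /=.
    apply: (@gle_same p (absz (k - FI I p)).+1) => //.
- move=> Iu; apply: FI_le; first exact: hv.1.
  by exists hv.
Qed.

Lemma FGI f : inc R f -> FI (GI f) = f.
Proof.
move=> hf; apply/ffunP => p; rewrite ffunE; apply: le_anti; apply/andP; split.
- case: (eqVneq (f p) (M p)) => [e | ne].
  + rewrite e; exact: mnl_le0.
  + apply: mnl_le; rewrite mem_filter (hf.1 p) andbT; apply/pbP.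
    have hv : gvert R (p, f p) by split; [exact: hf.1 | exact/eqP].
    by exists hv; rewrite /GI /=.
- have := mnl_in (M p) [seq k <- R p | pb (inI (GI f) (p,k))].
  rewrite inE => /orP[/eqP->| ]; first exact: le_maxR (hf.1 p).
  by rewrite mem_filter => /andP[/pbP [hv h] _].
Qed.

Lemma lt_cover_ind (g : P -> int) : (forall p1 p2, pcover p1 p2 -> g p1 < g p2) ->
  forall p1 p2, (p1 < p2)%O -> g p1 < g p2.
Proof.
move=> hc.
suff: forall n p1 p2, (#|[set z | (p1 < z)%O && (z < p2)%O]| < n)%N -> (p1 < p2)%O -> g p1 < g p2.
  by move=> h p1 p2; apply: h.
elim=> [//|n IH] p1 p2 hn lt.
case: (boolP [forall z, ~~ ((p1 < z)%O && (z < p2)%O)]) => [hf | ].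
  by apply: hc; rewrite /pcover lt hf.
rewrite negb_forall => /existsP [z]; rewrite negbK => /andP[l1 l2].
apply: (lt_trans (IH p1 z _ l1) (IH z p2 _ l2)).
- suff H : [set w | (p1 < w)%O && (w < z)%O] \proper [set w | (p1 < w)%O && (w < p2)%O].
    by have := proper_card H; lia.
  rewrite properE; apply/andP; split.
  + apply/subsetP => w; rewrite !inE => /andP[-> h]; exact: lt_trans h l2.
  + apply/subsetPn; exists z; by rewrite !inE ?l1 ?l2 ?ltxx.
- suff H : [set w | (z < w)%O && (w < p2)%O] \proper [set w | (p1 < w)%O && (w < p2)%O].
    by have := proper_card H; lia.
  rewrite properE; apply/andP; split.
  + apply/subsetP => w; rewrite !inE => /andP[h ->]; by rewrite (lt_trans l1 h).
  + apply/subsetPn; exists z; by rewrite !inE ?l1 ?l2 ?ltxx.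
Qed.

Lemma FI_cov I : order_ideal I -> forall p1 p2, pcover p1 p2 -> FI I p1 < FI I p2.
Proof.
move=> hI p1 p2 cov.
case: (FI_cases I p2) => [e | [v2 I2]].
  rewrite e; apply: le_lt_trans (FI_le_max I p1) _; exact: (hC cov).2.
set k2 := FI I p2.
have k2R := v2.1; rewrite /= in k2R.
have mlt : minS (R p1) < k2 := lt_le_trans (hC cov).1 (ge_minR k2R).
set s := [seq k <- R p1 | k < k2].
set k1 := mxl (minS (R p1)) s.
have [k1R k1lt] : k1 \in R p1 /\ k1 < k2.
  have := mxl_in (minS (R p1)) s; rewrite -/k1 inE => /orP[/eqP->|]; first by split; [exact: minR_in|].
  by rewrite mem_filter => /andP[-> ->].
have k1max : forall k', k' \in R p1 -> k' < k2 -> k' <= k1.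
  by move=> k' h1 h2; apply: mxl_ge; rewrite mem_filter h1 h2.
case: (eqVneq k1 (M p1)) => [e1|ne1].
  by apply: le_lt_trans (FI_le_max I p1) _; rewrite -e1.
have v1 : gvert R (p1,k1) by split => //; exact/eqP.
have g : gle R (p1,k1) (p2,k2).
  apply: (@gle_cov_pred p1 p2 k1 cov v1 (absz (M p2 - k2)).+1) => //.
have I1 : I (exist _ (p1,k1) v1) := hI (exist _ (p1,k1) v1) (exist _ (p2,k2) v2) g I2.
apply: le_lt_trans (FI_le k1R (ex_intro _ v1 I1)) k1lt.
Qed.

Lemma FI_inc I : order_ideal I -> inc R (FI I).
Proof. move=> hI; split; [exact: FI_in | apply: lt_cover_ind; exact: FI_cov]. Qed.

Lemma GI_ideal f : inc R f -> order_ideal (GI f).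
Proof. move=> hf u v h; exact: gle_lab hf h. Qed.

Lemma down_ideal v : order_ideal (down v).
Proof. move=> u w h1 h2; exact: rt_trans h1 h2. Qed.
Arguments down_ideal : clear implicits.

Lemma fle_G f g : inc R f -> inc R g -> @fle d P f g <-> (forall u, GI g u -> GI f u).
Proof.
move=> hf hg; split.
- by move=> h [[p k] hv]; rewrite /GI /= => h'; exact: le_trans (h p) h'.
- move=> h p; case: (eqVneq (g p) (M p)) => [e|ne].
    by rewrite e; exact: le_maxR (hf.1 p).
  have hv : gvert R (p, g p) by split; [exact: hg.1 | exact/eqP].
  exact: (h (exist _ (p, g p) hv) (lexx _)).
Qed.

Lemma fle_antisym (f g : {ffun P -> int}) : @fle d P f g -> @fle d P g f -> f = g.
Proof. by move=> h1 h2; apply/ffunP => p; apply: le_anti; rewrite h1 h2. Qed.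

Lemma inc_meet g h : inc R g -> inc R h -> inc R (fmeet g h).
Proof.
move=> [gR gi] [hR' hi]; split.
- by move=> p; rewrite ffunE /Num.min; case: leP.
- move=> p1 p2 lt; rewrite !ffunE lt_min !gt_min (gi _ _ lt) (hi _ _ lt) orbT.
  by [].
Qed.

Lemma GI_meet g h u : GI (fmeet g h) u <-> GI g u \/ GI h u.
Proof. by rewrite /GI ffunE ge_min; split => [/orP|[|]->]; rewrite ?orbT. Qed.

Lemma top_empty f u : is_top R f -> GI f u -> False.
Proof.
move=> [hf ht] hu.
have hI : order_ideal (fun _ : Gamma R => False) by [].
have hg := FI_inc hI.
have := (fle_G hg hf).1 (ht _ hg) u hu.
by move/(GFI hI).
Qed.

Lemma empty_top f : inc R f -> (forall u, ~ GI f u) -> is_top R f.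
Proof.
move=> hf he; split => // g hg; apply/(fle_G hg hf) => u h; by case: (he u).
Qed.

Lemma down_irr v : meet_irreducible R (FI (down v)).
Proof.
have hf := FI_inc (down_ideal v).
split => //.
- move=> ht; exact: (top_empty ht ((GFI (down_ideal v) v).2 (rt_refl _ _ _))).
- move=> g h hg hh e.
  have : GI (fmeet g h) v by rewrite -e; apply/(GFI (down_ideal v)); exact: rt_refl.
  move/GI_meet => [gv|hv].
  + left; apply: fle_antisym.
    * apply/(fle_G hf hg) => u gu; rewrite e; apply/GI_meet; by left.
    * apply/(fle_G hg hf) => u /(GFI (down_ideal v)) uv; exact: gle_lab hg uv gv.
  + right; apply: fle_antisym.
    * apply/(fle_G hf hh) => u gu; rewrite e; apply/GI_meet; by right.
    * apply/(fle_G hh hf) => u /(GFI (down_ideal v)) uv; exact: gle_lab hh uv hv.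
Qed.

Definition vs : seq (P * int) := flatten [seq [seq (p,k) | k <- R p] | p <- enum P].
Lemma mem_vs x : x.2 \in R x.1 -> x \in vs.
Proof.
case: x => p k /= h; apply/flatten_mapP; exists p; first by rewrite mem_enum.
exact: map_f.
Qed.

Lemma irr_down f : meet_irreducible R f -> exists v, FI (down v) = f.
Proof.
case=> hf ntop irr.
have ne : exists x, x \in vs /\ (gvert R x /\ f x.1 <= x.2).
  apply: NNPP => hno; apply: ntop; apply: empty_top => // u hu.
  apply: hno; exists (sval u); split; first exact: mem_vs (svalP u).1.
  split; [exact: svalP u | exact: hu].
have [x [xs [[vx fx] xmax]]] := @maximal_elem _ (gle R) (fun x => gvert R x /\ f x.1 <= x.2) vs (@rt_trans _ (gcov R)) ne.
set u : Gamma R := exist _ x vx.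
set J := fun w : Gamma R => GI f w /\ ~ gle R x (sval w).
have Jid : order_ideal J.
  move=> w1 w2 h [g1 g2]; split; first exact: gle_lab hf h g1.
  move=> h'; apply: g2; exact: rt_trans h' h.
have hg := FI_inc (down_ideal u).
have hh := FI_inc Jid.
have hm := inc_meet hg hh.
have e : f = fmeet (FI (down u)) (FI J).
  apply: fle_antisym.
  - apply/(fle_G hf hm) => w /GI_meet [/(GFI (down_ideal u)) h | /(GFI Jid) [h _]] //.
    exact: gle_lab hf h fx.
  - apply/(fle_G hm hf) => w hw; apply/GI_meet.
    case: (classic (gle R x (sval w))) => hx.
    + left; apply/(GFI (down_ideal u)); apply: xmax => //.
      * exact: mem_vs (svalP w).1.
      * split; [exact: svalP w | exact: hw].
    + by right; apply/(GFI Jid).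
case: (irr _ _ hg hh e) => [->|eJ]; first by exists u.
exfalso; have : GI f u by exact: fx.
rewrite eJ => /(GFI Jid) [_]; apply; exact: rt_refl.
Qed.

Lemma main :
  (exists phi : Gamma R -> MeetIrr R,
      bijective phi /\
      forall u v : Gamma R,
        gle R (sval u) (sval v) <-> fle (sval (phi v)) (sval (phi u))) /\
  (exists psi : Ideal R -> IncT R, bijective psi).
Proof.
split.
- pose phi (v : Gamma R) : MeetIrr R := exist _ (FI (down v)) (down_irr v).
  have phi_inj : injective phi.
    move=> u v /(congr1 sval) /= e; apply: sig_eq; apply: gle_antisym.
    + have : GI (FI (down u)) u by apply/(GFI (down_ideal u)); exact: rt_refl.
      by rewrite e => /(GFI (down_ideal v)).
    + have : GI (FI (down v)) v by apply/(GFI (down_ideal v)); exact: rt_refl.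
      by rewrite -e => /(GFI (down_ideal u)).
  have surj : forall m : MeetIrr R, exists v, phi v = m.
    move=> m; have [v hv] := irr_down (svalP m); exists v; exact: sig_eq.
  pose inv (m : MeetIrr R) := proj1_sig (constructive_indefinite_description _ (surj m)).
  have invK : cancel inv phi.
    by move=> m; rewrite /inv; case: constructive_indefinite_description.
  exists phi; split.
  + exists inv => //; move=> v; apply: phi_inj; by rewrite invK.
  + move=> u v /=.
    have hu := FI_inc (down_ideal u); have hv := FI_inc (down_ideal v).
    rewrite (fle_G hv hu); split.
    * move=> h w /(GFI (down_ideal u)) hw; apply/(GFI (down_ideal v)); exact: rt_trans hw h.
    * move=> h; have := h u; rewrite !GFI; [|exact: down_ideal|exact: down_ideal].
      by apply; exact: rt_refl.
- pose psi (I : Ideal R) : IncT R := exist _ (FI (sval I)) (FI_inc (svalP I)).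
  pose inv (f : IncT R) : Ideal R := exist _ (GI (sval f)) (GI_ideal (svalP f)).
  exists psi, inv.
  + move=> I; apply: sig_eq => /=; apply: functional_extensionality => u.
    apply: propositional_extensionality; exact: GFI (svalP I) u.
  + move=> f; apply: sig_eq => /=; exact: FGI (svalP f).
Qed.

End Main.

Theorem theorem2p14 (d : Order.disp_t) (P : finPOrderType d) (R : P -> seq int) :
  restriction_fun R -> consistent R ->
  (exists phi : Gamma R -> MeetIrr R,
      bijective phi /\
      forall u v : Gamma R,
        gle R (sval u) (sval v) <-> fle (sval (phi v)) (sval (phi u))) /\
  (exists psi : Ideal R -> IncT R, bijective psi).
Proof.
move=> hR hC; exact: (main hR hC).
Qed.
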